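(* Let $(G,d,(D_\lambda)_{\lambda>0},\Gamma,V)$ be a dilation datum, $\lambda_0>1$ with $D:=D_{\lambda_0}$ satisfying $D(\Gamma)\subset\Gamma$, and $r_+>0$ with $V\subset B(e,r_+)$. Let $r>r_+$ and $\lambda_0>\frac{r}{r-r_+}$. If $B(e,r)\subset V(n_0)$ for some $n_0\in\mathbb N$, then every bounded subset of $G$ is contained in $V(n)$ for some $n\in\mathbb N$, and for all $k\in\mathbb N$ \[B(e,c_-\lambda_0^{k-1})\subset V(n_0+k)\subset B(e,c_+\lambda_0^{n_0+k}),\] where $c_-:=\lambda_0(r-r_+)-r>0$ and $c_+:=r\big(1+\frac{\lambda_0}{\lambda_0-1}\big)$.
   Context: Dilation datum $(G,d,(D_\lambda),\Gamma,V)$: $G$ connected lcsc group, $d$ left-invariant metric inducing the topology, $\lambda\mapsto D_\lambda$ homomorphism $(\mathbb R_{>0},\cdot)\to\mathrm{Aut}(G)$ with $d(D_\lambda g,D_\lambda h)=\lambda d(g,h)$; $\Gamma$ uniform lattice with $D_\lambda(\Gamma)\subset\Gamma$ for some $\lambda>1$; $V$ bounded Borel set containing an open identity neighbourhood with $G=\bigsqcup_{\gamma\in\Gamma}\gamma V$. $B(g,r)$ is the open $d$-ball. $V(0):=V$ and $V(n):=D\big((V(n-1)\cap\Gamma)V\big)$ for $n\ge1$. *)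

(* Defs.v *)
From HB Require Import structures.
From mathcomp Require Import all_boot all_order all_algebra.
From mathcomp Require Import boolp classical_sets cardinality reals.
Set Implicit Arguments. Unset Strict Implicit. Unset Printing Implicit Defensive.
Import Order.TTheory GRing.Theory Num.Theory.
Local Open Scope classical_set_scope.
Local Open Scope ring_scope.

Section DilationDatum.
Variables (R : realType) (G : groupType) (d : G -> G -> R).

Definition dball (g : G) (r : R) : set G := [set h | d g h < r].

Definition dopen (U : set G) : Prop :=
  forall x, U x -> exists2 r : R, 0 < r & dball x r `<=` U.

Definition dcompact (K : set G) : Prop :=
  forall (I : Type) (U : I -> set G), (forall i, dopen (U i)) ->
    K `<=` \bigcup_(i in [set: I]) U i ->
    exists F : set I, finite_set F /\ K `<=` \bigcup_(i in F) U i.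

Definition dbounded (B : set G) : Prop := exists (x : G) (r : R), B `<=` dball x r.

Definition dborel (A : set G) : Prop :=
  forall S : set (set G),
    (forall U, dopen U -> S U) ->
    (forall X, S X -> S (~` X)) ->
    (forall X : nat -> set G, (forall n, S (X n)) -> S (\bigcup_(n in [set: nat]) X n)) ->
    S A.

Definition is_metric : Prop :=
  [/\ forall x y, 0 <= d x y, forall x y, d x y = 0 <-> x = y,
      forall x y, d x y = d y x & forall x y z, d x z <= d x y + d y z].

Definition left_invariant : Prop := forall g x y, d (g * x)%g (g * y)%g = d x y.

Definition topological_group : Prop :=
  (forall x y (eps : R), 0 < eps -> exists2 del : R, 0 < del &
     forall x' y', d x x' < del -> d y y' < del -> d (x * y)%g (x' * y')%g < eps) /\
  (forall x (eps : R), 0 < eps -> exists2 del : R, 0 < del &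
     forall x', d x x' < del -> d (x^-1)%g (x'^-1)%g < eps).

Definition dconnected : Prop :=
  forall U, dopen U -> dopen (~` U) -> U = set0 \/ U = setT.

Definition locally_compact : Prop :=
  forall x, exists K U, dcompact K /\ dopen U /\ U x /\ U `<=` K.

Definition second_countable : Prop :=
  exists B : nat -> set G, (forall n, dopen (B n)) /\
    forall U x, dopen U -> U x -> exists n, B n x /\ B n `<=` U.

Definition subgroup (H : set G) : Prop :=
  [/\ H 1%g, forall x y, H x -> H y -> H (x * y)%g & forall x, H x -> H (x^-1)%g].

Definition uniform_lattice (Gam : set G) : Prop :=
  [/\ subgroup Gam,
      (forall g, Gam g -> exists2 r : R, 0 < r & dball g r `&` Gam = [set g]) &
      exists2 K, dcompact K & forall x, exists g k, [/\ Gam g, K k & x = (g * k)%g]].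

Definition group_automorphism (f : G -> G) : Prop :=
  (forall x y, f (x * y)%g = (f x * f y)%g) /\ bijective f.

Record dilation_datum (D : R -> G -> G) (Gam V : set G) : Prop := {
  dd_metric : is_metric;
  dd_left_inv : left_invariant;
  dd_topgroup : topological_group;
  dd_connected : dconnected;
  dd_loc_compact : locally_compact;
  dd_second_countable : second_countable;
  dd_aut : forall l, 0 < l -> group_automorphism (D l);
  dd_hom1 : D 1 = id;
  dd_homM : forall l m, 0 < l -> 0 < m -> D (l * m) = D l \o D m;
  dd_scale : forall l g h, 0 < l -> d (D l g) (D l h) = l * d g h;
  dd_lattice : uniform_lattice Gam;
  dd_lattice_dil : exists2 l, 1 < l & D l @` Gam `<=` Gam;
  dd_V_bounded : dbounded V;
  dd_V_borel : dborel V;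
  dd_V_nbhd : exists U, [/\ dopen U, U 1%g & U `<=` V];
  dd_tiling_cover : forall x, exists g, Gam g /\ V (g^-1 * x)%g;
  dd_tiling_disj : forall x g1 g2, Gam g1 -> Gam g2 ->
      V (g1^-1 * x)%g -> V (g2^-1 * x)%g -> g1 = g2
}.

End DilationDatum.

Fixpoint Vseq (G : groupType) (Dl : G -> G) (Gam V : set G) (n : nat) : set G :=
  match n with
  | 0 => V
  | n'.+1 => Dl @` [set x | exists g v, [/\ (Vseq Dl Gam V n' `&` Gam) g, V v & x = (g * v)%g]]
  end.

(* Main.v *)
Require Import Defs.
From HB Require Import structures.
From mathcomp Require Import all_boot all_order all_algebra.
From mathcomp Require Import boolp classical_sets cardinality reals.
From mathcomp Require Import ring lra.
Import Order.TTheory GRing.Theory Num.Theory.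
Local Open Scope classical_set_scope.
Local Open Scope ring_scope.

Theorem lemma5 (R : realType) (G : groupType) (d : G -> G -> R) (D : R -> G -> G)
  (Gam V : set G) (lam0 rp r : R) (n0 : nat) :
  dilation_datum d D Gam V ->
  1 < lam0 -> D lam0 @` Gam `<=` Gam ->
  0 < rp -> V `<=` dball d 1%g rp ->
  rp < r -> r / (r - rp) < lam0 ->
  dball d 1%g r `<=` Vseq (D lam0) Gam V n0 ->
  let cm := lam0 * (r - rp) - r in
  let cp := r * (1 + lam0 / (lam0 - 1)) in
  [/\ 0 < cm,
      (forall B, dbounded d B -> exists n, B `<=` Vseq (D lam0) Gam V n) &
      forall k : nat,
        dball d 1%g (cm * lam0 ^ (k%:Z - 1)) `<=` Vseq (D lam0) Gam V (n0 + k) /\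
        Vseq (D lam0) Gam V (n0 + k) `<=` dball d 1%g (cp * lam0 ^+ (n0 + k))].
Proof.
move=> dd lam1 DGam rp0 Vrp rpr hlam hn0 cm cp.
have l0 : 0 < lam0 by lra.
have lm1 : 0 < lam0 - 1 by lra.
have lm1n : lam0 - 1 != 0 by rewrite gt_eqF.
have rrp : 0 < r - rp by lra.
have cm0 : 0 < cm.
  rewrite /cm; move: hlam; rewrite ltr_pdivrMr // => h; lra.
case: (dd_metric dd) => dpos _ dsym dtri.
have linv := dd_left_inv dd.
case: (dd_aut dd l0) => hom [Di DK KD].
have D1 : D lam0 1%g = 1%g.
  apply/esym/(@mulgI _ (D lam0 1%g)); by rewrite -hom !mulg1.
have sc x : d 1%g (D lam0 x) = lam0 * d 1%g x.
  by rewrite -{1}D1 (dd_scale dd) //.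
have dmul g v : d g (g * v)%g = d 1%g v.
  by rewrite -{1}(mulg1 g) linv.
have step m s : dball d 1%g s `<=` Vseq (D lam0) Gam V m ->
    dball d 1%g (lam0 * (s - rp)) `<=` Vseq (D lam0) Gam V m.+1.
  move=> hm y hy.
  have hx : d 1%g (Di y) < s - rp.
    move: hy; rewrite /dball /= -{1}(KD y) sc => h.
    by rewrite -(ltr_pM2l l0).
  case: (dd_tiling_cover dd (Di y)) => g [Gg Vg].
  exists (Di y); last by rewrite KD.
  exists g, (g^-1 * Di y)%g; split => //; last by rewrite mulVKg.
  split => //; apply: hm; rewrite /dball /=.
  have h1 := dtri 1%g (Di y) g.
  have h2 : d (Di y) g < rp.
    rewrite dsym -[X in d _ X](mulVKg g) dmul; exact: Vrp.
  lra.
set q := lam0 / (lam0 - 1).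
have q0 : 0 < q by rewrite /q divr_gt0.
have low k : dball d 1%g (rp * q + lam0 ^+ k * cm / (lam0 - 1))
    `<=` Vseq (D lam0) Gam V (n0 + k).
  elim: k => [|k IH].
    rewrite addn0; have -> : rp * q + lam0 ^+ 0 * cm / (lam0 - 1) = r.
      by rewrite /q /cm expr0; field.
    exact: hn0.
  rewrite addnS.
  have -> : rp * q + lam0 ^+ k.+1 * cm / (lam0 - 1) =
      lam0 * ((rp * q + lam0 ^+ k * cm / (lam0 - 1)) - rp).
    by rewrite /q exprS; field.
  exact: step.
have up n : Vseq (D lam0) Gam V n `<=`
    dball d 1%g (rp * (1 + q) * lam0 ^+ n - rp * q).
  elim: n => [|n IH] y /=.
    have -> : rp * (1 + q) * lam0 ^+ 0 - rp * q = rp by rewrite expr0; ring.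
    exact: Vrp.
  case=> x [g [v [[Vg Gg] Vv ->]]] <-.
  rewrite /dball /= sc.
  have h1 := dtri 1%g g (g * v)%g.
  rewrite dmul in h1.
  have h2 := IH g Vg; have h3 := Vrp v Vv; rewrite /dball /= in h2 h3.
  have -> : rp * (1 + q) * lam0 ^+ n.+1 - rp * q =
      lam0 * ((rp * (1 + q) * lam0 ^+ n - rp * q) + rp).
    by rewrite /q exprS; field.
  rewrite ltr_pM2l //; lra.
split => //.
- move=> B [x [rho hB]].
  set M := `|d 1%g x + rho| / cm.
  have M0 : 0 <= M by rewrite divr_ge0 // ltW.
  set k := Num.Def.archi_bound M.
  have hk := archi_boundP M0.
  have bern j : 1 + j%:R * (lam0 - 1) <= lam0 ^+ j.
    elim: j => [|j IH]; first by rewrite expr0 mul0r addr0.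
    rewrite exprS -natr1.
    have j0 : 0 <= j%:R :> R by [].
    have h1 : lam0 * (1 + j%:R * (lam0 - 1)) <= lam0 * lam0 ^+ j.
      by rewrite ler_pM2l.
    have h2 : 0 <= j%:R * ((lam0 - 1) * (lam0 - 1)).
      by rewrite mulr_ge0 // mulr_ge0 // ltW.
    have e : lam0 * (1 + j%:R * (lam0 - 1)) =
      1 + (j%:R + 1) * (lam0 - 1) + j%:R * ((lam0 - 1) * (lam0 - 1)) by ring.
    lra.
  exists (n0 + k)%N; move=> y By; apply: low.
  rewrite /dball /=.
  have h1 := dtri 1%g x y; have h2 := hB y By; rewrite /dball /= in h2.
  have h3 : d 1%g x + rho <= `|d 1%g x + rho| := ler_norm _.
  have h4 : `|d 1%g x + rho| < k%:R * cm by rewrite -ltr_pdivrMr.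
  have h5 : k%:R * cm <= lam0 ^+ k * cm / (lam0 - 1).
    rewrite ler_pdivlMr // -mulrA [cm * _]mulrC mulrA ler_pM2r //.
    have := bern k; lra.
  have h6 : 0 <= rp * q by rewrite mulr_ge0 // ltW.
  lra.
- move=> k; split.
    move=> y hy; apply: low; move: hy; rewrite /dball /=; move/lt_le_trans; apply.
    have -> : cm * lam0 ^ (k%:Z - 1) = lam0 ^+ k * cm / lam0.
      rewrite expfzDr ?gt_eqF //.
      have -> : lam0 ^ (-1) = lam0^-1 by rewrite -[RHS]expr1z exprz_inv.
      by rewrite mulrA (mulrC cm).
    have X0 : 0 <= lam0 ^+ k * cm by rewrite mulr_ge0 // ?exprn_ge0 // ltW.
    have h6 : 0 <= rp * q by rewrite mulr_ge0 // ltW.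
    have : lam0 ^+ k * cm / lam0 <= lam0 ^+ k * cm / (lam0 - 1).
      apply: ler_wpM2l => //; rewrite lef_pV2 ?posrE //; lra.
    lra.
  move=> y /(up _ y); rewrite /dball /=; move/lt_le_trans; apply.
  have P0 : 0 < lam0 ^+ (n0 + k) by rewrite exprn_gt0.
  have W0 : 0 < (1 + q) * lam0 ^+ (n0 + k) by rewrite mulr_gt0 // ltr_wpDr // ltW.
  rewrite /cp -/q.
  set W := (1 + q) * _ in W0.
  have e1 : rp * (1 + q) * lam0 ^+ (n0 + k) = rp * W by rewrite /W mulrA.
  have e2 : r * (1 + q) * lam0 ^+ (n0 + k) = r * W by rewrite /W mulrA.
  rewrite e1 e2.
  have h6 : 0 <= rp * q by rewrite mulr_ge0 // ltW.
  have h7 : 0 < (r - rp) * W by rewrite mulr_gt0 // subr_gt0.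
  lra.
Qed.
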